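(* Let $f$ be a perfect $2$-coloring of $H(n,q)$ with quotient matrix $\begin{pmatrix} a & b\\ c& d\end{pmatrix}$ such that the set of vertices of color $1$ can be partitioned into $k$-faces. If there exists a $1$-perfect code in $H(q+1,q)$, then there exist perfect $(q+1)$-colorings $g'$ and $g''$ of $H(qn,q)$ with quotient matrices $T'=(t'_{i,j})$ and $T''=(t''_{i,j})$, $i,j\in\{1,\dots,q+1\}$, where for $1\le i,j\le q$: $t'_{i,i}=a-k(q-1)$, $t'_{i,j}=a+k$ ($i\ne j$), $t''_{i,i}=a+k(q-1)^2$, $t''_{i,j}=a-k(q-1)$ ($i\ne j$); and in both matrices the entries $(i,q+1)$ for $i\le q$ equal $qb$, the entries $(q+1,j)$ for $j\le q$ equal $c$, and the entry $(q+1,q+1)$ equals $qd$.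
   Context: The Hamming graph $H(n,q)$ has vertex set $\mathbb{Z}_q^n$, two vertices adjacent iff they differ in exactly one coordinate. A $k$-face of $H(n,q)$ is a set of vertices obtained by fixing the values of $n-k$ coordinates and letting the remaining $k$ coordinates range over $\mathbb{Z}_q$. A perfect $r$-coloring is a surjective map from the vertex set onto $\{1,\dots,r\}$ such that every vertex of color $i$ has exactly $s_{i,j}$ neighbours of color $j$; $(s_{i,j})$ is its quotient matrix. A $1$-perfect code in $H(n,q)$ is a set $C$ of vertices such that every radius-$1$ Hamming ball contains exactly one element of $C$. *)

(* Defs.v *)
From HB Require Import structures.
From mathcomp Require Import all_boot all_order all_algebra.
Set Implicit Arguments. Unset Strict Implicit. Unset Printing Implicit Defensive.
Import Order.TTheory GRing.Theory Num.Theory.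

(* Vertices of the Hamming graph H(n,q): words of length n over the
   alphabet 'I_q = {0,..,q-1} (identified with Z_q; no group structure
   is needed). *)
Definition hvert (n q : nat) := {ffun 'I_n -> 'I_q}.

Definition hdist n q (x y : hvert n q) : nat := #|[set i | x i != y i]|.

Definition hadj n q (x y : hvert n q) : bool := hdist x y == 1%N.

Definition is_face n q (k : nat) (F : {set hvert n q}) : Prop :=
  exists (S : {set 'I_n}) (v : hvert n q),
    #|S| = k /\ F = [set x : hvert n q | [forall i, (i \notin S) ==> (x i == v i)]].

(* perfect r-coloring f with quotient matrix M (colors 1..r are 'I_r) *)
Definition perfect_coloring n q r (f : hvert n q -> 'I_r)
    (M : 'I_r -> 'I_r -> int) : Prop :=
  (forall j : 'I_r, exists x, f x = j) /\
  (forall (x : hvert n q) (j : 'I_r),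
      (#|[set y | hadj x y & f y == j]| : int) = M (f x) j).

Definition one_perfect_code n q (C : {set hvert n q}) : Prop :=
  forall x : hvert n q, #|[set y in C | hdist x y <= 1]| = 1%N.

(* the 2x2 matrix ((a b) (c d)); color 1 = index 0, color 2 = index 1 *)
Definition mat2 (a b c d : int) : 'I_2 -> 'I_2 -> int :=
  fun i j => if val i == 0%N then (if val j == 0%N then a else b)
             else (if val j == 0%N then c else d).

(* (q+1)x(q+1) matrix: entries (i,j), i,j <= q (0-based i,j < q) are
   dg on the diagonal and off outside; column q+1 is cl, row q+1 is rw,
   corner is cr. *)
Definition qmat (q : nat) (dg off cl rw cr : int) : 'I_q.+1 -> 'I_q.+1 -> int :=
  fun i j =>
    if (val i < q)%N then
      (if (val j < q)%N then (if i == j then dg else off) else cl)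
    else (if (val j < q)%N then rw else cr).
Arguments qmat q dg off cl rw cr : clear implicits.

(* Main.v *)
Require Import Defs.
From HB Require Import structures.
From mathcomp Require Import all_boot all_order all_algebra.
From mathcomp Require Import zify ring.
Import Order.TTheory GRing.Theory Num.Theory.
Set Implicit Arguments. Unset Strict Implicit. Unset Printing Implicit Defensive.

Section Ham.
Variables (n q : nat).
Implicit Types x y : hvert n q.

Definition upd x (p : 'I_n) (v : 'I_q) : hvert n q :=
  [ffun i => if i == p then v else x i].

Lemma updE x p v i : upd x p v i = if i == p then v else x i.
Proof. by rewrite ffunE. Qed.

Lemma upd_id x p : upd x p (x p) = x.
Proof. by apply/ffunP=> i; rewrite updE; case: eqP => // ->. Qed.

Lemma hdistE x y : hdist x y = \sum_i (x i != y i : nat).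
Proof.
rewrite /hdist -sum1dep_card big_mkcond /=.
by apply: eq_bigr => i _; case: (x i != y i).
Qed.

Lemma hdist_sub x y (A : {set 'I_n}) :
  (forall i, x i != y i -> i \in A) -> hdist x y <= #|A|.
Proof. by move=> H; apply: subset_leq_card; apply/subsetP=> i; rewrite inE => /H. Qed.

Lemma hdist0 x y : hdist x y = 0 -> x = y.
Proof.
move/cards0_eq => H; apply/ffunP=> i; apply/eqP; apply/negPn/negP => Hi.
by have := in_set0 i; rewrite -H inE Hi.
Qed.

Lemma hdist_upd x p v : v != x p -> hdist x (upd x p v) = 1%N.
Proof.
move=> Hv; rewrite /hdist (_ : [set i | _] = [set p]) ?cards1 //.
apply/setP=> i; rewrite !inE updE; case: (eqVneq i p) => [->|Hip].
  by rewrite eq_sym Hv.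
by rewrite eqxx.
Qed.

Lemma adj_upd x y : hadj x y -> exists p, y = upd x p (y p) /\ y p != x p.
Proof.
rewrite /hadj /hdist => /cards1P [p Hp].
exists p; split; last first.
  have : p \in [set p] by rewrite inE.
  by rewrite -Hp inE eq_sym.
apply/ffunP=> i; rewrite updE; case: eqP => [->|/eqP Hi] //.
apply/eqP/negPn/negP => H.
have : i \in [set i | x i != y i] by rewrite inE eq_sym.
by rewrite Hp inE (negbTE Hi).
Qed.

Lemma sum_adj x (F : hvert n q -> nat) :
  \sum_(y | hadj x y) F y = \sum_p \sum_(v | v != x p) F (upd x p v).
Proof.
rewrite pair_big_dep /=.
rewrite (_ : \sum_(y | hadj x y) F y =
   \sum_(y in [set upd x pv.1 pv.2 | pv in [pred pv : 'I_n * 'I_q | pv.2 != x pv.1]]) F y).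
  rewrite big_imset /=; first by apply: eq_bigl => pv.
  move=> [p v] [p' v']; rewrite !inE /= => Hv Hv' E.
  have E1 : upd x p v p = upd x p' v' p by rewrite E.
  rewrite !updE eqxx in E1.
  case: (eqVneq p p') E1 => [<- -> //| Hpp' E1].
  by move: Hv; rewrite E1 eqxx.
apply: eq_bigl => y; apply/idP/imsetP.
  case/adj_upd => p [Ey Hy]; exists (p, y p); first by rewrite inE.
  by [].
by move=> [[p v]]; rewrite inE /= => Hv ->; rewrite /hadj hdist_upd.
Qed.

Lemma card_adj x (P : pred (hvert n q)) :
  #|[set y | hadj x y & P y]| = \sum_p \sum_(v | v != x p) (P (upd x p v) : nat).
Proof.
rewrite -(sum_adj x (fun y => (P y : nat))) -sum1dep_card big_mkcondr /=.
by apply: eq_bigr => y _; case: (P y).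
Qed.

End Ham.

Section Code.
Variables (q : nat) (C : {set hvert q.+1 q}) (j0 : 'I_q).
Hypothesis HC : one_perfect_code C.

Lemma qgt0 : 0 < q. Proof. exact: leq_ltn_trans (leq0n _) (ltn_ord j0). Qed.
Definition addq (a i : 'I_q) : 'I_q := Ordinal (ltn_pmod (a + i) qgt0).

Lemma addq_inj a a' i : addq a i = addq a' i -> a = a'.
Proof.
move/(congr1 val) => /= /eqP; rewrite eqn_modDr !modn_small // => /eqP H.
exact: val_inj.
Qed.

Lemma addq_surj a c : exists i, addq a i = c.
Proof.
exists (Ordinal (ltn_pmod (c + (q - a)) qgt0)); apply: val_inj => /=.
rewrite modnDmr (_ : a + (c + (q - a)) = c + q); last by have := ltn_ord a; lia.
by rewrite modnDr modn_small.
Qed.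

Definition sh (y : hvert q q) i := upd y j0 (addq (y j0) i).

Definition W (y : hvert q q) i (r : 'I_q) : hvert q.+1 q :=
  [ffun p => if unlift ord_max p is Some p' then sh y i p' else r].

Lemma W_lift y i r p' : W y i r (lift ord_max p') = sh y i p'.
Proof. by rewrite ffunE liftK. Qed.

Lemma W_max y i r : W y i r ord_max = r.
Proof. by rewrite ffunE unlift_none. Qed.

Lemma distW y y' i r r' : hdist (W y i r) (W y' i r') <= hdist y y' + (r != r').
Proof.
rewrite !hdistE big_ord_recr /=.
have Hw : forall p', widen_ord (leqnSn q) p' = lift ord_max p'.
  by move=> p'; apply: val_inj; rewrite /= /bump leqNgt ltn_ord.
rewrite !W_max; apply: leq_add => //; apply: leq_sum => p' _.
rewrite Hw !W_lift.
case: (eqVneq (y p') (y' p')) => [E|_]; last by case: (_ != _).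
rewrite /sh !updE; case: (eqVneq p' j0) => [Hp|_]; [rewrite -Hp E | rewrite E];
  by rewrite eqxx.
Qed.

Lemma W_inj y y' i r r' : W y i r = W y' i r' -> y = y'.
Proof.
move=> E; apply/ffunP=> p'.
have : W y i r (lift ord_max p') = W y' i r' (lift ord_max p') by rewrite E.
rewrite !W_lift /sh !updE; case: (eqVneq p' j0) => [->|_] //; exact: addq_inj.
Qed.

Lemma code_dist c1 c2 : c1 \in C -> c2 \in C -> hdist c1 c2 <= 2 -> c1 = c2.
Proof.
move=> H1 H2 Hd; case: (eqVneq c1 c2) => // Hne; exfalso.
have [p Hp] : exists p, c1 p != c2 p.
  apply/existsP; apply: contraT; rewrite negb_exists => /forallP H.
  by move: Hne; rewrite (_ : c1 = c2) ?eqxx //; apply/ffunP=> i; apply/eqP; have := H i; rewrite negbK.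
pose w := upd c1 p (c2 p).
have Hw1 : hdist w c1 <= 1.
  rewrite -(cards1 p); apply: hdist_sub => i; rewrite /w updE inE.
  by case: (eqVneq i p) => //=; rewrite eqxx.
have Hw2 : hdist w c2 <= 1.
  apply: leq_trans (hdist_sub (A := [set i | c1 i != c2 i] :\ p) _) _.
    move=> i; rewrite /w updE !inE; case: (eqVneq i p) => [->|Hip]; first by rewrite eqxx.
    by [].
  by move: Hd; rewrite /hdist (cardsD1 p) inE Hp add1n ltnS.
have := HC w.
have : [set c1; c2] \subset [set y in C | hdist w y <= 1].
  by apply/subsetP=> y; rewrite !inE => /orP [] /eqP ->; rewrite ?H1 ?H2 ?Hw1 ?Hw2.
move/subset_leq_card; rewrite cards2 Hne => H3 H4; move: H3; rewrite H4.
by [].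
Qed.

Definition i0 : 'I_q := Ordinal qgt0.

Lemma EX y : exists ir : 'I_q * 'I_q, W y ir.1 ir.2 \in C.
Proof.
case: (boolP [exists ir : 'I_q * 'I_q, W y ir.1 ir.2 \in C]) => [/existsP //|/existsPn Hn].
exfalso.
pose w r := W y i0 r.
pose c r := odflt (w r) [pick c in C | hdist (w r) c <= 1].
have cP : forall r, c r \in C /\ hdist (w r) (c r) <= 1.
  move=> r; rewrite /c; case: pickP => [c0 /andP [] //|H].
  have := HC (w r); case/eqP/cards1P => c0 Hc0.
  have : c0 \in [set c1 in C | hdist (w r) c1 <= 1] by rewrite Hc0 inE.
  by rewrite inE H.
have cnw : forall r, c r != w r.
  move=> r; apply/eqP => E; have := Hn (i0, r); rewrite /= -/(w r) -E.
  by rewrite (proj1 (cP r)).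
pose p r := odflt ord_max [pick pp | w r pp != c r pp].
have pP : forall r, w r (p r) != c r (p r).
  move=> r; rewrite /p; case: pickP => [pp -> //|H].
  by move: (cnw r); rewrite (_ : c r = w r) ?eqxx //; apply/ffunP=> pp;
    apply/eqP; have := H pp; rewrite eq_sym => /negbFE.
have pU : forall r pp, pp != p r -> w r pp = c r pp.
  move=> r pp Hpp; apply/eqP/negPn/negP => Hd.
  have : [set p r; pp] \subset [set i | w r i != c r i].
    by apply/subsetP=> i; rewrite !inE => /orP [] /eqP ->; rewrite ?pP ?Hd.
  move/subset_leq_card; rewrite cards2 eq_sym Hpp.
  have := proj2 (cP r); rewrite /hdist; lia.
have pnm : forall r, p r != ord_max.
  move=> r; apply/eqP => E.
  have : c r = W y i0 (c r ord_max).
    apply/ffunP=> pp; case: (unliftP ord_max pp) => [j ->|->]; last by rewrite W_max.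
    rewrite W_lift -pU; first by rewrite /w W_lift.
    by rewrite E eq_sym; exact: neq_lift.
  move=> E2; have := Hn (i0, c r ord_max); rewrite /= -E2.
  by rewrite (proj1 (cP r)).
have pnj : forall r, p r != lift ord_max j0.
  move=> r; apply/eqP => E.
  have [i Hi] := addq_surj (y j0) (c r (lift ord_max j0)).
  have : c r = W y i r.
    apply/ffunP=> pp; case: (unliftP ord_max pp) => [j ->|->]; last first.
      by rewrite W_max -pU ?W_max // eq_sym; apply/eqP=> E3; move: (pnm r); rewrite -E3 eqxx.
    rewrite W_lift; case: (eqVneq j j0) => [->|Hj].
      by rewrite /sh updE eqxx Hi.
    rewrite -pU; last by rewrite E; apply: contra Hj => /eqP/lift_inj ->.
    by rewrite /w W_lift /sh !updE (negbTE Hj).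
  move=> E2; have := Hn (i, r); rewrite /= -E2.
  by rewrite (proj1 (cP r)).
have cmax : forall r, c r ord_max = r.
  by move=> r; rewrite -pU ?W_max // eq_sym pnm.
have pinj : injective p.
  move=> r r' E; apply/eqP; apply: contraT => Hrr.
  have : hdist (c r) (c r') <= 2.
    apply: leq_trans (hdist_sub (A := [set p r; ord_max]) _) _; last first.
      by rewrite cards2; case: (_ != _).
    move=> pp Hd; rewrite !inE; apply/negPn/negP; rewrite negb_or => /andP [H1 H2].
    move: Hd; rewrite -pU // -pU -?E //.
    case: (unliftP ord_max pp) H2 => [j ->|->]; last by rewrite eqxx.
    by rewrite /w !W_lift eqxx.
  move/(code_dist (proj1 (cP r)) (proj1 (cP r'))) => E2.
  by move: Hrr; rewrite -(cmax r) -(cmax r') E2 eqxx.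
have Hsub : [set p r | r in 'I_q] \subset ~: [set ord_max; lift ord_max j0].
  apply/subsetP=> pp /imsetP [r _ ->]; rewrite !inE negb_or pnm pnj.
  by [].
move/subset_leq_card: Hsub; rewrite card_imset // card_ord.
have := cardsC [set ord_max; lift ord_max (j0 : 'I_q)].
rewrite cards2 card_ord (_ : ord_max != lift ord_max j0); last first.
  by apply/eqP => E; move: (neq_lift (ord_max : 'I_q.+1) j0); rewrite -E eqxx.
have := qgt0; lia.
Qed.

Definition lamir y := odflt (i0, i0) [pick ir : 'I_q * 'I_q | W y ir.1 ir.2 \in C].

Lemma lamirP y : W y (lamir y).1 (lamir y).2 \in C.
Proof.
rewrite /lamir; case: pickP => [ir -> //|H].
by case: (EX y) => ir; rewrite H.
Qed.

Definition lam y := (lamir y).1.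
Definition psi y := (lamir y).2.

Lemma lam_psi_key y y' : y != y' -> lam y = lam y' ->
  hdist y y' + (psi y != psi y') <= 2 -> False.
Proof.
move=> Hne E Hd.
have H1 := lamirP y; have H2 := lamirP y'.
rewrite -/(lam y) -/(psi y) in H1; rewrite -/(lam y') -/(psi y') -E in H2.
have := code_dist H1 H2 (leq_trans (distW _ _ _ _ _) Hd).
by move/W_inj => E2; move: Hne; rewrite E2 eqxx.
Qed.

Lemma lam_upd_inj (z : hvert q q) j : injective (fun v => lam (upd z j v)).
Proof.
move=> v v' /= E; apply/eqP; apply: contraT => Hne; exfalso.
apply: (lam_psi_key _ E).
  apply: contra Hne => /eqP E2.
  have : upd z j v j = upd z j v' j by rewrite E2.
  by rewrite !updE eqxx => ->.
apply: leq_trans (leq_add (hdist_sub (A := [set j]) _) (leq_b1 _)) _.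
  by move=> i; rewrite !updE inE; case: (eqVneq i j) => //=; rewrite eqxx.
by rewrite cards1.
Qed.

Lemma psi_neq y y' : y != y' -> lam y = lam y' -> hdist y y' <= 2 -> psi y != psi y'.
Proof.
move=> Hne E Hd; apply/negP => /eqP Hp; apply: (lam_psi_key Hne E).
by rewrite Hp eqxx addn0.
Qed.

End Code.

Section Main.
Variables (n q k : nat) (f : hvert n q -> 'I_2) (P : {set {set hvert n q}}).
Variables (lam psi : hvert q q -> 'I_q).
Hypothesis q_gt1 : 1 < q.
Hypothesis Hlam : forall z j, injective (fun v => lam (upd z j v)).
Hypothesis Hpsi : forall y y', y != y' -> lam y = lam y' -> hdist y y' <= 2 -> psi y != psi y'.
Hypothesis HP : partition P [set x | val (f x) == 0].
Hypothesis HF : forall F, F \in P -> is_face k F.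

Lemma q_gt0 : 0 < q. Proof. exact: ltnW. Qed.

Definition faceset (S : {set 'I_n}) (v : hvert n q) : {set hvert n q} :=
  [set x : hvert n q | [forall i, (i \notin S) ==> (x i == v i)]].

Definition Sof (F : {set hvert n q}) : {set 'I_n} :=
  odflt set0 [pick S : {set 'I_n} | [exists v, (#|S| == k) && (F == faceset S v)]].

Lemma SofP F : F \in P -> exists v, #|Sof F| = k /\ F = faceset (Sof F) v.
Proof.
move=> /HF [S [v [HS HFv]]]; rewrite /Sof; case: pickP => [S' /existsP [v' /andP [/eqP H1 /eqP H2]]|H].
  by exists v'.
by have := H S; rewrite /=; move/negbT/negP; case; apply/existsP; exists v; rewrite HS HFv !eqxx.
Qed.

Definition Ss (s : hvert n q) := Sof (pblock P s).

Lemma coverP : cover P = [set x | val (f x) == 0].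
Proof. by case/and3P: HP => /eqP. Qed.

Lemma trivP : trivIset P.
Proof. by case/and3P: HP. Qed.

Lemma inA s : (s \in cover P) = (val (f s) == 0).
Proof. by rewrite coverP inE. Qed.

Lemma pblock_cover s s' : s' \in pblock P s -> s' \in cover P.
Proof.
move=> H; rewrite -mem_pblock (same_pblock trivP H) //.
Qed.

Lemma face_upd s m t : val (f s) == 0 -> t != s m ->
  (upd s m t \in pblock P s) = (m \in Ss s).
Proof.
move=> Hs Ht; rewrite -inA in Hs.
have [v [_ HFv]] := SofP (pblock_mem Hs).
have Hsin : s \in pblock P s by rewrite mem_pblock.
rewrite /Ss; set S := Sof (pblock P s) in HFv *.
have Hmem : forall x, (x \in pblock P s) = [forall i, (i \notin S) ==> (x i == v i)].
  by move=> x; rewrite {1}HFv inE.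
rewrite Hmem; move: Hsin; rewrite Hmem => /forallP Hsv.
case: (boolP (m \in S)) => Hm.
  apply/forallP => i; apply/implyP => Hi; rewrite updE.
  case: (eqVneq i m) => [Eim|_]; first by move: Hi; rewrite Eim Hm.
  by have := Hsv i; rewrite Hi.
apply/negP => /forallP /(_ m); rewrite Hm /= updE eqxx => /eqP Htv.
by move: Ht; rewrite Htv; have := Hsv m; rewrite Hm /= => /eqP ->; rewrite eqxx.
Qed.


Definition mi (j : 'I_q) (m : 'I_n) : 'I_(q * n) := mxvec_index j m.

Lemma mi_bij : bijective (fun jm : 'I_q * 'I_n => mi jm.1 jm.2).
Proof.
have [g Hg1 Hg2] := onT_bij (curry_mxvec_bij q n).
exists g => [[j m]|p]; first exact: (Hg1 (j, m)).
by rewrite -[RHS](Hg2 p); case: (g p).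
Qed.

Lemma mi_eq j m j' m' : (mi j' m' == mi j m) = (j' == j) && (m' == m).
Proof.
apply/eqP/andP => [E|[/eqP -> /eqP ->] //].
have := bij_inj mi_bij (x1 := (j', m')) (x2 := (j, m)) E.
by case => -> ->.
Qed.

Definition blk (x : hvert (q * n) q) (m : 'I_n) : hvert q q := [ffun j => x (mi j m)].
Definition Lx (x : hvert (q * n) q) : hvert n q := [ffun m => lam (blk x m)].

Lemma blk_upd x j m v i :
  blk (upd x (mi j m) v) i = if i == m then upd (blk x m) j v else blk x i.
Proof.
case: (eqVneq i m) => [->|Him]; apply/ffunP => j'; rewrite !ffunE mi_eq.
  by rewrite eqxx andbT.
by rewrite (negbTE Him) andbF.
Qed.

Definition beta (z : hvert q q) j : 'I_q -> 'I_q := invF (@Hlam z j).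

Lemma beta_spec z j t : lam (upd z j (beta z j t)) = t.
Proof. exact: (f_invF (@Hlam z j)). Qed.

Lemma beta_bij z j : bijective (beta z j).
Proof. by exists (fun v => lam (upd z j v)) => v; [exact: beta_spec | exact: (invF_f (@Hlam z j))]. Qed.

Lemma beta_eq z j t : (beta z j t != z j) = (t != lam z).
Proof.
congr negb; rewrite -(inj_eq (@Hlam z j)) /= beta_spec.
by rewrite upd_id.
Qed.

Lemma Lx_upd x j m t :
  Lx (upd x (mi j m) (beta (blk x m) j t)) = upd (Lx x) m t.
Proof.
apply/ffunP => i; rewrite !ffunE blk_upd.
by case: (eqVneq i m) => [_|_] //; rewrite beta_spec.
Qed.

Definition colr (N : nat) : 'I_q.+1 := inord (N %% q).

Lemma colr_val N : (colr N : nat) = N %% q.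
Proof. by rewrite inordK // ltnS ltnW // ltn_pmod // q_gt0. Qed.

Definition gfun (e : bool) (x : hvert (q * n) q) : 'I_q.+1 :=
  let s := Lx x in
  if val (f s) == 0 then
    colr (\sum_(i | i \notin Ss s) psi (blk x i) +
          (if e then \sum_(i in Ss s) lam (blk x i) else 0))
  else ord_max.

Lemma sum_colr (h : 'I_q -> 'I_q) K (c : 'I_q.+1) : injective h ->
  \sum_j (colr (h j + K) == c : nat) = (c < q).
Proof.
move=> hinj.
pose H j : 'I_q := Ordinal (ltn_pmod (h j + K) q_gt0).
have Hinj : injective H.
  move=> j j' /(congr1 val) /= /eqP; rewrite eqn_modDr !modn_small // => /eqP E.
  by apply: hinj; apply: val_inj.
have -> : \sum_j (colr (h j + K) == c : nat) = \sum_j (widen_ord (leqnSn q) (H j) == c : nat).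
  apply: eq_bigr => j _; congr (nat_of_bool _); congr (_ == _); apply: val_inj.
  by rewrite /= colr_val.
transitivity (\sum_u (widen_ord (leqnSn q) u == c : nat)).
  by rewrite [RHS](reindex_inj Hinj).
case: (ltnP c q) => Hc.
  rewrite (bigD1 (Ordinal Hc)) //= big1.
    by rewrite (_ : widen_ord _ _ == c) //; apply/eqP; apply: val_inj.
  move=> u Hu; apply/eqP; rewrite eqb0; apply: contra Hu => /eqP E.
  by apply/eqP; apply: val_inj; rewrite /= -E.
rewrite big1 // => u _; apply/eqP; rewrite eqb0; apply/eqP => E.
by move: Hc; rewrite -E /= leqNgt ltn_ord.
Qed.

Lemma count_blocks e x (c : 'I_q.+1) :
  #|[set y | hadj x y & gfun e y == c]| =
  \sum_m \sum_(t | t != Lx x m) \sum_j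
     (gfun e (upd x (mi j m) (beta (blk x m) j t)) == c : nat).
Proof.
rewrite (card_adj x (fun y => gfun e y == c)).
rewrite (reindex (fun jm : 'I_q * 'I_n => mi jm.1 jm.2)) /=; last exact: onW_bij mi_bij.
rewrite -(pair_big predT predT (fun j m => \sum_(v | v != x (mi j m))
   (gfun e (upd x (mi j m) v) == c : nat))) /=.
rewrite exchange_big /=; apply: eq_bigr => m _.
rewrite [RHS]exchange_big /=; apply: eq_bigr => j _.
rewrite (reindex (beta (blk x m) j)) /=; last exact: onW_bij (beta_bij _ _).
by apply: eq_bigl => t; rewrite [in RHS]ffunE -(beta_eq (blk x m) j) ffunE.
Qed.

Definition Kn e (S : {set 'I_n}) x m :=
  \sum_(i | (i \notin S) && (i != m)) psi (blk x i) +
  (if e then \sum_(i in S) lam (blk x i) else 0).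

Definition Km (S : {set 'I_n}) x m :=
  \sum_(i | i \notin S) psi (blk x i) + \sum_(i in S | i != m) lam (blk x i).

Lemma gfun_psi e x m : val (f (Lx x)) == 0 -> m \notin Ss (Lx x) ->
  gfun e x = colr (psi (blk x m) + Kn e (Ss (Lx x)) x m).
Proof. by move=> H1 H2; rewrite /gfun H1 (bigD1 m) //= addnA. Qed.

Lemma gfun_lam x m : val (f (Lx x)) == 0 -> m \in Ss (Lx x) ->
  gfun true x = colr (Km (Ss (Lx x)) x m + lam (blk x m)).
Proof.
move=> H1 H2; rewrite /gfun H1 /= (bigD1 m H2) /=; congr colr; rewrite /Km.
by rewrite addnCA [RHS]addnC.
Qed.

Lemma Kn_upd e (S : {set 'I_n}) (x : hvert (q * n) q) (j : 'I_q) (m : 'I_n) (v : 'I_q) : m \notin S -> Kn e S (upd x (mi j m) v) m = Kn e S x m.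
Proof.
move=> Hm; rewrite /Kn; congr (_ + _).
  by apply: eq_bigr => i /andP [_ Him]; rewrite blk_upd (negbTE Him).
case: e => //; apply: eq_bigr => i Hi; rewrite blk_upd.
by case: (eqVneq i m) => [E|//]; move: Hm; rewrite -E Hi.
Qed.

Lemma Km_upd (S : {set 'I_n}) (x : hvert (q * n) q) (j : 'I_q) (m : 'I_n) (v : 'I_q) : m \in S -> Km S (upd x (mi j m) v) m = Km S x m.
Proof.
move=> Hm; rewrite /Km; congr (_ + _).
  apply: eq_bigr => i Hi; rewrite blk_upd.
  by case: (eqVneq i m) => [E|//]; move: Hi; rewrite E Hm.
by apply: eq_bigr => i /andP [_ Him]; rewrite blk_upd (negbTE Him).
Qed.

Lemma Lx_m x m : Lx x m = lam (blk x m).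
Proof. by rewrite ffunE. Qed.

Lemma I_max e x m t (c : 'I_q.+1) : val (f (upd (Lx x) m t)) != 0 ->
  \sum_j (gfun e (upd x (mi j m) (beta (blk x m) j t)) == c : nat) = q * (q <= c).
Proof.
move=> Hf.
rewrite (eq_bigr (fun _ => (q <= c : nat))); last first.
  move=> j _; rewrite /gfun Lx_upd (negbTE Hf) /=.
  congr (nat_of_bool _); apply/eqP/idP => [<- //|H].
  by apply: val_inj; apply/eqP; rewrite /= eqn_leq H -ltnS ltn_ord.
by rewrite big_const_ord iter_addn_0 mulnC.
Qed.

Lemma upd_upd (s : hvert n q) m t : upd (upd s m t) m (s m) = s.
Proof. by apply/ffunP => i; rewrite !updE; case: eqP => [->|]. Qed.

Lemma psi_beta_inj z t : t != lam z -> injective (fun j => psi (upd z j (beta z j t))).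
Proof.
move=> Ht j j' E; apply/eqP; apply: contraT => Hjj; exfalso.
move: E; apply/eqP; apply: Hpsi; last first.
- apply: leq_trans (hdist_sub (A := [set j; j']) _) _; last by rewrite cards2; case: (_ != _).
  move=> i; rewrite !updE !inE.
  by case: (eqVneq i j) => [//|_]; case: (eqVneq i j') => [//|_]; rewrite eqxx.
- by rewrite !beta_spec.
apply/eqP => E.
have : upd z j (beta z j t) j = upd z j' (beta z j' t) j by rewrite E.
rewrite !updE eqxx (negbTE Hjj) => E2.
by move: Ht; rewrite -(beta_eq z j) E2 eqxx.
Qed.

Lemma I_other e x m t (c : 'I_q.+1) : t != Lx x m ->
  val (f (upd (Lx x) m t)) == 0 ->
  Lx x \notin pblock P (upd (Lx x) m t) ->
  \sum_j (gfun e (upd x (mi j m) (beta (blk x m) j t)) == c : nat) = (c < q).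
Proof.
move=> Ht Hf Hnot.
set s := Lx x in Ht Hf Hnot *; set s' := upd s m t in Hf Hnot *.
have Hm : m \notin Ss s'.
  rewrite -(face_upd (s:=s') (m:=m) (t:=s m)) //; first by rewrite /s' upd_upd.
  by rewrite /s' updE eqxx eq_sym.
rewrite (eq_bigr (fun j => (colr (psi (upd (blk x m) j (beta (blk x m) j t)) +
                       Kn e (Ss s') x m) == c : nat))); last first.
  move=> j _; rewrite (@gfun_psi e _ m) ?Lx_upd // Kn_upd // blk_upd eqxx.
  by [].
by apply: sum_colr; apply: psi_beta_inj; rewrite -Lx_m.
Qed.

Lemma same_face x m t : val (f (Lx x)) == 0 -> m \in Ss (Lx x) -> t != Lx x m ->
  [/\ Ss (upd (Lx x) m t) = Ss (Lx x) & val (f (upd (Lx x) m t)) == 0].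
Proof.
move=> Hf Hm Ht.
have Hin : upd (Lx x) m t \in pblock P (Lx x) by rewrite face_upd.
have Eb := same_pblock trivP Hin.
split; first by rewrite /Ss Eb.
by rewrite -inA; apply: pblock_cover Hin.
Qed.

Lemma I_face0 x m t (c : 'I_q.+1) : val (f (Lx x)) == 0 -> m \in Ss (Lx x) ->
  t != Lx x m ->
  \sum_j (gfun false (upd x (mi j m) (beta (blk x m) j t)) == c : nat) =
  q * (gfun false x == c).
Proof.
move=> Hf Hm Ht; have [ES Hf'] := same_face Hf Hm Ht.
rewrite (eq_bigr (fun _ => (gfun false x == c : nat))); last first.
  move=> j _; rewrite /gfun Lx_upd ES Hf' Hf /=.
  congr (colr (_ + _) == c); apply: eq_bigr => i Hi; rewrite blk_upd.
  by case: (eqVneq i m) => [E|//]; move: Hi; rewrite E Hm.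
by rewrite big_const_ord iter_addn_0 mulnC.
Qed.

Lemma I_face1 x m t (c : 'I_q.+1) : val (f (Lx x)) == 0 -> m \in Ss (Lx x) ->
  t != Lx x m ->
  \sum_j (gfun true (upd x (mi j m) (beta (blk x m) j t)) == c : nat) =
  q * (colr (Km (Ss (Lx x)) x m + t) == c).
Proof.
move=> Hf Hm Ht; have [ES Hf'] := same_face Hf Hm Ht.
rewrite (eq_bigr (fun _ => (colr (Km (Ss (Lx x)) x m + t) == c : nat))); last first.
  move=> j _; rewrite (@gfun_lam _ m) Lx_upd ?ES ?Hf' //.
  by rewrite Km_upd // blk_upd eqxx beta_spec.
by rewrite big_const_ord iter_addn_0 mulnC.
Qed.

Definition Icnt e x m t (c : 'I_q.+1) :=
  \sum_j (gfun e (upd x (mi j m) (beta (blk x m) j t)) == c : nat).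

Lemma I2_0 (u : 'I_2) : (u == ord0) = (val u == 0).
Proof. by []. Qed.

Lemma I2_1 (u : 'I_2) : (u == ord_max) = (val u != 0).
Proof. by case: u => [[|[|]] ?]. Qed.

Lemma I_gen e x m t c : t != Lx x m ->
  (val (f (upd (Lx x) m t)) == 0 -> Lx x \notin pblock P (upd (Lx x) m t)) ->
  Icnt e x m t c = (f (upd (Lx x) m t) == ord_max) * (q * (q <= c)) +
                   (f (upd (Lx x) m t) == ord0) * (c < q).
Proof.
move=> Ht Hn; rewrite I2_0 I2_1 /Icnt.
case: (boolP (val (f (upd (Lx x) m t)) == 0)) => H.
  by rewrite I_other //; [rewrite /= mul0n add0n mul1n | exact: Hn].
by rewrite I_max // /= addn0 mul1n.
Qed.

Lemma sum_gen (Pm : pred 'I_n) e x c :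
  (forall m t, Pm m -> t != Lx x m -> val (f (upd (Lx x) m t)) == 0 ->
      Lx x \notin pblock P (upd (Lx x) m t)) ->
  \sum_(m | Pm m) \sum_(t | t != Lx x m) Icnt e x m t c =
  (\sum_(m | Pm m) \sum_(t | t != Lx x m) (f (upd (Lx x) m t) == ord_max : nat)) * (q * (q <= c)) +
  (\sum_(m | Pm m) \sum_(t | t != Lx x m) (f (upd (Lx x) m t) == ord0 : nat)) * (c < q).
Proof.
move=> Hn; rewrite !big_distrl -big_split /=; apply: eq_bigr => m Hm.
rewrite !big_distrl -big_split /=; apply: eq_bigr => t Ht.
by rewrite I_gen //; exact: Hn.
Qed.

Definition B x (j2 : 'I_2) := \sum_m \sum_(t | t != Lx x m) (f (upd (Lx x) m t) == j2 : nat).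

Lemma B_card x j2 : #|[set s' | hadj (Lx x) s' & f s' == j2]| = B x j2.
Proof. by rewrite card_adj. Qed.

Lemma count_notA e x c : val (f (Lx x)) != 0 ->
  #|[set y | hadj x y & gfun e y == c]| = B x ord_max * (q * (q <= c)) + B x ord0 * (c < q).
Proof.
move=> Hs; rewrite count_blocks -/(Icnt _ _ _ _ _).
rewrite (sum_gen (Pm := predT)) //.
move=> m t _ Ht Hf'; apply/negP => Hin.
have := pblock_cover Hin; rewrite inA; exact/negP.
Qed.

Lemma sumC1 (a : 'I_q) K : \sum_(t | t != a) K = (q - 1) * K.
Proof.
transitivity (\sum_(t in predC1 a) K); first by apply: eq_bigl.
by rewrite sum_nat_const cardC1 card_ord subn1.
Qed.

Lemma count_A e x c : val (f (Lx x)) == 0 ->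
  let S := Ss (Lx x) in
  let X1 := \sum_(m | m \notin S) \sum_(t | t != Lx x m) (f (upd (Lx x) m t) == ord_max : nat) in
  let X0 := \sum_(m | m \notin S) \sum_(t | t != Lx x m) (f (upd (Lx x) m t) == ord0 : nat) in
  [/\ B x ord_max = X1, B x ord0 = X0 + #|S| * (q - 1) &
      #|[set y | hadj x y & gfun e y == c]| = X1 * (q * (q <= c)) + X0 * (c < q) +
         (if e then q * (#|S| * ((c < q) - (gfun true x == c)))
          else #|S| * ((q - 1) * (q * (gfun false x == c))))].
Proof.
move=> Hs S X1 X0.
have Hsplit : forall F : 'I_n -> nat,
    \sum_m F m = \sum_(m in S) F m + \sum_(m | m \notin S) F m.
  by move=> F; rewrite (bigID (fun m => m \in S)).
have Hin : forall m t, m \in S -> t != Lx x m -> val (f (upd (Lx x) m t)) == 0.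
  by move=> m t Hm Ht; have [_ ->] := same_face Hs Hm Ht.
split.
- rewrite /B Hsplit big1 ?add0n // => m Hm; apply: big1 => t Ht.
  by rewrite I2_1 Hin.
- rewrite /B Hsplit addnC; congr (_ + _).
  rewrite -sum_nat_const; apply: eq_bigr => m Hm.
  rewrite -[q - 1]muln1 -(sumC1 (Lx x m)); apply: eq_bigr => t Ht.
  by rewrite I2_0 Hin.
rewrite count_blocks -/(Icnt _ _ _ _ _) Hsplit (sum_gen (Pm := fun m => m \notin S)); last first.
  move=> m t Hm Ht Hf'; apply/negP => Hin2.
  have Eb := same_pblock trivP Hin2.
  have : upd (Lx x) m t \in pblock P (Lx x).
    by rewrite Eb mem_pblock inA.
  by rewrite face_upd // -/S (negbTE Hm).
rewrite addnC; congr (_ + _).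
case: e.
  rewrite mulnCA -sum_nat_const; apply: eq_bigr => m Hm.
  rewrite (eq_bigr (fun t : 'I_q => q * (colr (Km S x m + t) == c : nat))); last first.
    by move=> t Ht; rewrite I_face1.
  rewrite -big_distrr /=; congr (_ * _).
  have E := sum_colr (h := id) (Km S x m) c (fun a b (E : id a = id b) => E).
  rewrite (bigD1 (Lx x m)) //= in E.
  rewrite -E (@gfun_lam x m) // -/S -Lx_m [Lx x m + _]addnC addKn.
  by apply: eq_bigr => t Ht; rewrite addnC.
rewrite -sum_nat_const; apply: eq_bigr => m Hm.
rewrite -(sumC1 (Lx x m)); apply: eq_bigr => t Ht.
by rewrite I_face0.
Qed.

Definition mkx (Bk : 'I_n -> hvert q q) : hvert (q * n) q :=
  [ffun p => mxvec (\matrix_(j < q, m < n) Bk m j) ord0 p].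

Lemma blk_mkx Bk m : blk (mkx Bk) m = Bk m.
Proof. by apply/ffunP => j; rewrite !ffunE /mi mxvecE mxE. Qed.

Definition j1 : 'I_q := Ordinal q_gt0.
Definition z1 : hvert q q := [ffun _ => j1].
Definition zt t := upd z1 j1 (beta z1 j1 t).
Lemma lam_zt t : lam (zt t) = t.
Proof. exact: beta_spec. Qed.

Lemma Kn_mkx e (S : {set 'I_n}) Bk Bk' m0 : m0 \notin S ->
  (forall i, i != m0 -> Bk i = Bk' i) -> Kn e S (mkx Bk) m0 = Kn e S (mkx Bk') m0.
Proof.
move=> Hm H; rewrite /Kn; congr (_ + _).
  by apply: eq_bigr => i /andP [_ Him]; rewrite !blk_mkx H.
case: e => //; apply: eq_bigr => i Hi; rewrite !blk_mkx H //.
by apply: contra Hm => /eqP <-.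
Qed.

Lemma gfun_surj e (c : 'I_q.+1) : (exists s, f s = ord0) -> (exists s, f s = ord_max) ->
  exists x, gfun e x = c.
Proof.
move=> [s1 Hs1] [s2 Hs2].
case: (ltnP c q) => Hc; last first.
  exists (mkx (fun m => zt (s2 m))).
  have E : Lx (mkx (fun m => zt (s2 m))) = s2.
    by apply/ffunP=> m; rewrite ffunE blk_mkx lam_zt.
  rewrite /gfun E Hs2 /=; apply: val_inj => /=; apply/eqP.
  by rewrite eqn_leq Hc -ltnS ltn_ord.
have Hs1A : val (f s1) == 0 by rewrite Hs1.
have [m0 Hm0] : exists m0, m0 \notin Ss s1.
  apply/existsP; apply: contraT; rewrite negb_exists => /forallP Hall.
  have Hc1 : s1 \in cover P by rewrite inA.
  have [v [_ HFv]] := SofP (pblock_mem Hc1).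
  have : s2 \in pblock P s1.
    rewrite HFv inE; apply/forallP => i; have := Hall i; rewrite negbK.
    by rewrite /Ss => ->.
  by move/pblock_cover; rewrite inA Hs2.
pose t' := if s1 m0 == j1 then Ordinal q_gt1 else j1.
have Ht' : t' != s1 m0.
  rewrite /t'; case: (eqVneq (s1 m0) j1) => [->|H]; last by rewrite eq_sym.
  by apply/eqP => /(congr1 val).
pose w := zt t'.
have Hw : s1 m0 != lam w by rewrite lam_zt eq_sym.
pose Bj j := fun m => if m == m0 then upd w j (beta w j (s1 m0)) else zt (s1 m).
have ELx : forall j, Lx (mkx (Bj j)) = s1.
  move=> j; apply/ffunP => m; rewrite ffunE blk_mkx /Bj.
  by case: (eqVneq m m0) => [->|_]; [exact: beta_spec | exact: lam_zt].
have Hsum : \sum_j (gfun e (mkx (Bj j)) == c : nat) = (c < q).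
  rewrite (eq_bigr (fun j => (colr (psi (upd w j (beta w j (s1 m0))) +
               Kn e (Ss s1) (mkx (Bj j1)) m0) == c : nat))).
    exact: sum_colr (psi_beta_inj Hw).
  move=> j _; rewrite (@gfun_psi e _ m0) ?ELx // blk_mkx /Bj eqxx.
  rewrite (@Kn_mkx e _ (Bj j) (Bj j1) m0) //.
  by move=> i Hi; rewrite /Bj (negbTE Hi).
have [j Hj] : exists j, gfun e (mkx (Bj j)) == c.
  apply/existsP; apply: contraT; rewrite negb_exists => /forallP H.
  by move: Hsum; rewrite big1 ?Hc // => j _; rewrite (negbTE (H j)).
by exists (mkx (Bj j)); apply/eqP.
Qed.

Lemma main_pc e (a b c0 d dg off : int) :
  perfect_coloring f (mat2 a b c0 d) ->
  (forall (X0 : nat) (gc : bool), Posz (X0 + k * (q - 1)) = a ->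
     Posz (X0 + (if e then q * (k * (1 - gc)) else k * ((q - 1) * (q * gc)))) =
     (if gc then dg else off)) ->
  perfect_coloring (gfun e) (qmat q dg off (Posz q * b)%R c0 (Posz q * d)%R).
Proof.
move=> [Hsur Hc] Har; split.
  by move=> c; apply: gfun_surj; apply: Hsur.
move=> x c.
have HB : forall j2, Posz (B x j2) = mat2 a b c0 d (f (Lx x)) j2.
  by move=> j2; rewrite -B_card Hc.
rewrite /qmat.
case: (boolP (val (f (Lx x)) == 0)) => Hs; last first.
  have Hgx : gfun e x = ord_max by rewrite /gfun (negbTE Hs).
  rewrite count_notA // Hgx /= ltnn.
  have H0 := HB ord0; have H1 := HB ord_max.
  rewrite /mat2 (negbTE Hs) /= in H0 H1.
  case: (ltnP c q) => Hcq.
    by rewrite /= !muln0 muln1 add0n.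
  by rewrite /= !muln0 !muln1 addn0 PoszM -H1 mulrC.
have Hcov : Lx x \in cover P by rewrite inA.
have [v [HS _]] := SofP (pblock_mem Hcov).
have Hgx : gfun e x < q by rewrite /gfun Hs /= colr_val ltn_pmod // q_gt0.
have [HX1 HX0 Hcnt] := count_A e c Hs.
rewrite Hcnt Hgx.
have H0 := HB ord0; have H1 := HB ord_max.
rewrite /mat2 Hs /= in H0 H1.
rewrite HX0 /Ss HS in H0.
rewrite HX1 in H1.
case: (ltnP c q) => Hcq.
  rewrite /= !muln0 muln1 add0n -(Har _ (gfun e x == c) H0).
  by case: e {Hcnt Hgx Har}; rewrite /Ss HS.
have Hgc : (gfun e x == c) = false.
  by apply/negbTE; apply/eqP => E; move: Hgx; rewrite E ltnNge Hcq.
move: Hgc; case: e {Hcnt Hgx Har} => Hgc.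
  by rewrite Hgc /= sub0n !muln0 muln1 !addn0 PoszM -H1 mulrC.
by rewrite Hgc /= !muln0 muln1 !addn0 PoszM -H1 mulrC.
Qed.

End Main.

Local Open Scope ring_scope.

Lemma ar1 (q X0 k : nat) (a : int) : (0 < q)%N -> Posz (X0 + k * (q - 1))%N = a ->
  Posz (X0 + q * (k * (1 - true)))%N = a - k%:Z * (q%:Z - 1).
Proof. move=> Hq <-; case: q Hq => // r _; rewrite subn1 /= ?subnn ?subn0 -[r.+1]addn1 !PoszD !PoszM ?PoszD ?PoszM; ring. Qed.

Lemma ar2 (q X0 k : nat) (a : int) : (0 < q)%N -> Posz (X0 + k * (q - 1))%N = a ->
  Posz (X0 + q * (k * (1 - false)))%N = a + k%:Z.
Proof. move=> Hq <-; case: q Hq => // r _; rewrite subn1 /= ?subnn ?subn0 -[r.+1]addn1 !PoszD !PoszM ?PoszD ?PoszM; ring. Qed.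

Lemma ar3 (q X0 k : nat) (a : int) : (0 < q)%N -> Posz (X0 + k * (q - 1))%N = a ->
  Posz (X0 + k * ((q - 1) * (q * true)))%N = a + k%:Z * (q%:Z - 1) ^+ 2.
Proof. move=> Hq <-; case: q Hq => // r _; rewrite subn1 /= ?subnn ?subn0 -[r.+1]addn1 !PoszD !PoszM ?PoszD ?PoszM; ring. Qed.

Lemma ar4 (q X0 k : nat) (a : int) : (0 < q)%N -> Posz (X0 + k * (q - 1))%N = a ->
  Posz (X0 + k * ((q - 1) * (q * false)))%N = a - k%:Z * (q%:Z - 1).
Proof. move=> Hq <-; case: q Hq => // r _; rewrite subn1 /= ?subnn ?subn0 -[r.+1]addn1 !PoszD !PoszM ?PoszD ?PoszM; ring. Qed.

Theorem lemma9 (n q k : nat) (f : hvert n q -> 'I_2) (a b c d : int) :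
  perfect_coloring f (mat2 a b c d) ->
  (exists P : {set {set hvert n q}},
      partition P [set x | val (f x) == 0%N] /\
      (forall F, F \in P -> is_face k F)) ->
  (exists C : {set hvert q.+1 q}, one_perfect_code C) ->
  exists (g' g'' : hvert (q * n)%N q -> 'I_q.+1),
    perfect_coloring g'
      (qmat q (a - k%:Z * (q%:Z - 1)) (a + k%:Z)
              (q%:Z * b) c (q%:Z * d)) /\
    perfect_coloring g''
      (qmat q (a + k%:Z * (q%:Z - 1) ^+ 2) (a - k%:Z * (q%:Z - 1))
              (q%:Z * b) c (q%:Z * d)).
Proof.
move=> Hf [P [HP HFa]] [C HC].
have [x0 Hx0] := Hf.1 ord0.
have [x1 Hx1] := Hf.1 ord_max.
have [i Hi] : exists i, x0 i != x1 i.
  apply/existsP; apply: contraT; rewrite negb_exists => /forallP H.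
  have E : x0 = x1 by apply/ffunP => i; apply/eqP; have := H i; rewrite negbK.
  by move: Hx1; rewrite -E Hx0.
have Hq1 : (1 < q)%N.
  have h0 := ltn_ord (x0 i); have h1 := ltn_ord (x1 i).
  have : (x0 i : nat) != x1 i by [].
  lia.
have Hq0 : (0 < q)%N by lia.
pose j0 := x0 i.
have Hlam := @lam_upd_inj q C j0 HC.
have Hpsi := @psi_neq q C j0 HC.
exists (gfun k f P (lam C j0) (psi C j0) true), (gfun k f P (lam C j0) (psi C j0) false).
split.
  apply: (main_pc Hq1 Hlam Hpsi HP HFa Hf) => X0 [] Ha /=.
    exact: ar1.
  exact: ar2.
apply: (main_pc Hq1 Hlam Hpsi HP HFa Hf) => X0 [] Ha /=.
  exact: ar3.
exact: ar4.
Qed.
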